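(* Let $m\ge 2$ and let $B$ be a blocker in $CK(2m)$ such that $e=[2m-3,2m-2]\in B$ and $f=[2m-2,2m-1]\notin B$. Then $e$ is the only edge of $B$ having $2m-2$ or $2m-1$ as an endpoint.
   Context: $CK(2m)$ denotes the complete convex geometric graph whose vertices are the $2m$ vertices of a convex polygon, labelled cyclically $0,1,\dots,2m-1$, and whose edges are all straight segments between pairs of vertices. Two edges with four distinct endpoints cross iff their endpoints alternate in the cyclic order. A simple perfect matching (SPM) is a set of $m$ edges that are pairwise disjoint (no common endpoint and no crossing). A blocking set is a set of edges containing at least one edge of every SPM. A blocker is a blocking set with exactly $m$ edges. *)

(* Defs.v *)
From mathcomp Require Import all_boot.
Set Implicit Arguments. Unset Strict Implicit. Unset Printing Implicit Defensive.

(* Vertices of CK(2m) are 'I_(2m), labelled cyclically 0..2m-1 in convex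
   position.  An edge is a 2-element subset of the vertices. *)
Definition is_edge (n : nat) (e : {set 'I_n}) : bool := #|e| == 2.

(* Two edges cross iff they have four distinct endpoints that alternate in
   the cyclic order, i.e. (with a<b, c<d) a<c<b<d or c<a<d<b. *)
Definition cross (n : nat) (e f : {set 'I_n}) : bool :=
  [exists a : 'I_n, exists b : 'I_n, exists c : 'I_n, exists d : 'I_n,
    [&& e == [set a; b], f == [set c; d], a < b, c < d &
        ((a < c < b) && (b < d)) || ((c < a < d) && (d < b))]].

Definition edisj (n : nat) (e f : {set 'I_n}) : bool :=
  [disjoint e & f] && ~~ cross e f.

Definition is_spm (m : nat) (M : {set {set 'I_(2 * m)}}) : bool :=
  [&& [forall e in M, is_edge e], #|M| == m &
      [forall e in M, forall f in M, (e != f) ==> edisj e f]].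

Definition is_blocking (m : nat) (B : {set {set 'I_(2 * m)}}) : bool :=
  [forall e in B, is_edge e] &&
  [forall M : {set {set 'I_(2 * m)}}, is_spm M ==> (M :&: B != set0)].

Definition is_blocker (m : nat) (B : {set {set 'I_(2 * m)}}) : bool :=
  is_blocking B && (#|B| == m).

Definition nseg (m a b : nat) : {set 'I_(2 * m)} :=
  [set x : 'I_(2 * m) | (val x == a) || (val x == b)].

Definition has_end (m k : nat) (g : {set 'I_(2 * m)}) : bool :=
  [exists x in g, val x == k].

(* Main.v *)
From mathcomp Require Import all_boot.
From Stdlib Require Import Lia.
Require Import Defs.
Set Implicit Arguments. Unset Strict Implicit. Unset Printing Implicit Defensive.

Ltac tolia :=
  repeat match goal with
  | H : (_ = false) |- _ => move/negbT: H => H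
  | H : is_true (~~ (_ <= _)) |- _ => rewrite -ltnNge in H
  | H : is_true (_ <= _) |- _ => move/leP: H => H
  | H : is_true (_ == _) |- _ => move/eqP: H => H
  | H : is_true (~~ (_ == _)) |- _ => move/eqP: H => H
  | |- is_true (_ <= _) => apply/leP
  | |- is_true (_ != _) => apply/eqP
  | |- is_true (~~ _) => apply/negP => Hn
  end; unfold subn, addn, muln in *; repeat (rewrite <- plusE in * ); repeat (rewrite <- minusE in * ); repeat (rewrite <- multE in * ); simpl in *; try lia.

Definition pp (N s x : nat) : nat :=
  if x <= s then s - x else if x < N then N + s - x
  else if x == N then N.+1 else N.

Lemma pp_spec N s x : (x <= s /\ pp N s x = s - x \/ s < x /\ x < N /\ pp N s x = N + s - x
   \/ x = N /\ pp N s x = N.+1 \/ N < x /\ pp N s x = N)%coq_nat.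
Proof. rewrite /pp; case: (leqP x s) => h1. left; tolia.
case: (ltnP x N) => h2. right; left; tolia.
case: eqP => h3. right; right; left; tolia. right; right; right; tolia. Qed.

Ltac ppl N s := repeat match goal with |- context [pp N s ?x] =>
   let h := fresh "hp" in have h := pp_spec N s x; move: h; generalize (pp N s x) end.

Lemma pp_lt N s x : s < N -> x < N.+2 -> pp N s x < N.+2.
Proof. ppl N s; intros; tolia. Qed.

Lemma pp_invol N s x : s < N -> x < N.+2 -> pp N s (pp N s x) = x.
Proof. ppl N s; intros; tolia. Qed.

Lemma pp_neq k j x : pp (2 * k) (2 * j + 1) x != x.
Proof. ppl (2 * k) (2 * j + 1); intros; tolia. Qed.

Lemma pp_nc N s x y : s < N -> x < y -> y < pp N s x -> pp N s x < pp N s y -> False.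
Proof. ppl N s; intros; tolia. Qed.

Lemma pp_sum N s x : s < N -> x < N -> pp N s x < N /\ (x + pp N s x = s \/ x + pp N s x = N + s).
Proof. ppl N s; intros; split; tolia. Qed.

Lemma in_nseg m a b (z : 'I_(2 * m)) : (z \in nseg m a b) = (val z == a) || (val z == b).
Proof. by rewrite inE. Qed.

Lemma nseg_eq m a b (Ha : a < 2 * m) (Hb : b < 2 * m) :
  nseg m a b = [set Ordinal Ha; Ordinal Hb].
Proof. by apply/setP => z; rewrite !inE. Qed.

Lemma nseg_card m a b : a < 2 * m -> b < 2 * m -> a != b -> #|nseg m a b| = 2.
Proof.
move=> Ha Hb ab; rewrite (nseg_eq Ha Hb) cards2.
have -> : (Ordinal Ha != Ordinal Hb) = (a != b) by [].
by rewrite ab.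
Qed.

Lemma nseg_sum m a b : a < 2 * m -> b < 2 * m -> a != b ->
  \sum_(v in nseg m a b) val v = a + b.
Proof.
move=> Ha Hb ab; rewrite (nseg_eq Ha Hb) big_setU1 ?big_set1 //=.
rewrite inE; have -> : (Ordinal Ha == Ordinal Hb) = (a == b) by [].
by rewrite (negbTE ab).
Qed.

Lemma nsegC m a b : nseg m a b = nseg m b a.
Proof. by apply/setP => z; rewrite !inE orbC. Qed.

Definition Ep m (p : nat -> nat) : {set {set 'I_(2 * m)}} :=
  [set nseg m (val x) (p (val x)) | x : 'I_(2 * m)].

Section Gen.
Variables (m : nat) (p : nat -> nat).
Hypothesis hp1 : forall x, x < 2 * m -> p x < 2 * m.
Hypothesis hp2 : forall x, x < 2 * m -> p (p x) = x.
Hypothesis hp3 : forall x, p x != x.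
Hypothesis hp4 : forall x y, x < y -> y < p x -> p x < p y -> False.

Lemma key (x z : 'I_(2 * m)) : z \in nseg m x (p x) -> nseg m x (p x) = nseg m z (p z).
Proof.
rewrite in_nseg => /orP[/eqP ->|/eqP ->] //.
by rewrite hp2 // nsegC.
Qed.

Lemma key2 (x z w : 'I_(2 * m)) : z \in nseg m x (p x) -> w \in nseg m x (p x) ->
  val z < val w -> val w = p (val z).
Proof.
move=> hz hw zw; move: hw; rewrite (key hz) in_nseg => /orP[/eqP h|/eqP //].
by rewrite h ltnn in zw.
Qed.

Lemma Ep_partition : partition (Ep m p) [set: 'I_(2 * m)].
Proof.
apply/and3P; split.
- apply/eqP/setP => z; rewrite inE; apply/bigcupP; exists (nseg m z (p z)).
    exact: imset_f.
  by rewrite in_nseg eqxx.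
- apply/trivIsetP => A B /imsetP[x _ ->] /imsetP[y _ ->] neq.
  rewrite -setI_eq0; apply/eqP/setP => z; rewrite !inE.
  apply/negbTE/negP => /andP[z1 z2]; apply/negP: neq; apply/negPn/eqP.
  have h1 : z \in nseg m x (p x) by rewrite inE.
  have h2 : z \in nseg m y (p y) by rewrite inE.
  by rewrite (key h1) (key h2).
- apply/negP => /imsetP[x _ h].
  have : x \in nseg m x (p x) by rewrite in_nseg eqxx.
  by rewrite -h inE.
Qed.

Lemma Ep_spm : is_spm (Ep m p).
Proof.
have cardE : {in Ep m p, forall A : {set 'I_(2 * m)}, #|A| = 2}.
  move=> A /imsetP[x _ ->]; apply: nseg_card. exact: ltn_ord. apply: hp1; exact: ltn_ord. by rewrite eq_sym hp3.
apply/and3P; split.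
- apply/forallP => A; apply/implyP => hA; by rewrite /is_edge cardE.
- have h := card_uniform_partition cardE Ep_partition.
  rewrite cardsT card_ord in h.
  by rewrite -(eqn_pmul2r (_ : 0 < 2)) // -h mulnC.
- apply/forallP => A; apply/implyP => hA; apply/forallP => B; apply/implyP => hB.
  apply/implyP => neq; apply/andP; split.
    by move: Ep_partition => /and3P[_ /trivIsetP tI _]; apply: tI.
  move: hA hB => /imsetP[x _ ->] /imsetP[y _ ->].
  apply/negP => /existsP[a /existsP[b /existsP[c /existsP[d]]]].
  case/and5P => /eqP hA /eqP hB ab cd hor.
  have ha : a \in nseg m x (p x) by rewrite hA !inE eqxx.
  have hb : b \in nseg m x (p x) by rewrite hA !inE eqxx orbT.
  have hc : c \in nseg m y (p y) by rewrite hB !inE eqxx.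
  have hd : d \in nseg m y (p y) by rewrite hB !inE eqxx orbT.
  have eb := key2 ha hb ab; have ed := key2 hc hd cd.
  case/orP: hor => /andP[/andP[h1 h2] h3].
    by apply: (hp4 h1); rewrite -?eb -?ed.
  by apply: (hp4 h1); rewrite -?eb -?ed.
Qed.
End Gen.

Definition phi m N (h : {set 'I_(2 * m)}) : nat := ((\sum_(v in h) val v) %% N)./2.

Theorem corollary3p5 (m : nat) (hm : 2 <= m) (B : {set {set 'I_(2 * m)}})
  (hB : is_blocker B)
  (he : nseg m (2 * m - 3) (2 * m - 2) \in B)
  (hf : nseg m (2 * m - 2) (2 * m - 1) \notin B) :
  forall g, g \in B ->
    has_end (2 * m - 2) g || has_end (2 * m - 1) g ->
    g = nseg m (2 * m - 3) (2 * m - 2).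
Proof.
move=> g gB hg.
case: (eqVneq g (nseg m (2 * m - 3) (2 * m - 2))) => // neq; exfalso.
have [N hN] : exists N, 2 * m - 2 = N by eexists.
have h2m : 2 * m = N.+2 by tolia.
have h2m1 : 2 * m - 1 = N.+1 by tolia.
have hNk : N = 2 * (m - 1) by tolia.
rewrite hN h2m1 in he hf neq hg.
set e := nseg m (2 * m - 3) N in he neq.
have hNlt : N < 2 * m by rewrite h2m.
have hblk : forall M, is_spm M -> M :&: B != set0.
  by case/andP: hB => /andP[_ /forallP h] _ M hM; exact: (implyP (h M) hM).
have hs : forall j : 'I_(m - 1), 2 * j + 1 < N.
  move=> j; have hj := ltn_ord j; tolia.
have Mspm : forall j : 'I_(m - 1), is_spm (Ep m (pp N (2 * j + 1))).
  move=> j; apply: Ep_spm.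
  - by move=> x; rewrite h2m => hx; apply: pp_lt.
  - by move=> x; rewrite h2m => hx; apply: pp_invol.
  - by move=> x; rewrite hNk; apply: pp_neq.
  - by move=> x y; apply: pp_nc.
pose F (j : 'I_(m - 1)) := odflt set0 [pick h in Ep m (pp N (2 * j + 1)) :&: B].
have hFj : forall j, [/\ F j \in B, (forall w, w \in F j -> val w < N) & phi N (F j) = j].
  move=> j; rewrite /F; case: pickP => [h|hnone]; last first.
    have := hblk _ (Mspm j); case/set0Pn => h hin; by rewrite hnone in hin.
  rewrite inE => /andP[/imsetP[x _ ->] hB'].
  case: (ltnP (val x) N) => hx.
  - have [hpx hsum] := pp_sum (hs j) hx.
    have hxp : val x != pp N (2 * j + 1) x.
      by rewrite eq_sym hNk; apply: pp_neq.
    split => //.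
    + by move=> w; rewrite in_nseg => /orP[] /eqP ->.
    + rewrite /phi (nseg_sum (ltn_ord x) (ltn_trans hpx hNlt) hxp).
      have -> : (x + pp N (2 * j + 1) x) %% N = 2 * j + 1.
        case: hsum => ->; last rewrite modnDl; by rewrite modn_small.
      by rewrite addnC mul2n (half_bit_double _ true).
  - have hx2 : val x < N.+2 by rewrite -h2m ltn_ord.
    have hfe : nseg m (val x) (pp N (2 * j + 1) x) = nseg m N N.+1.
      have := pp_spec N (2 * j + 1) x; have := hs j.
      case: (eqVneq (val x) N) => hxN.
        rewrite hxN => *; congr nseg; tolia.
      move=> *; rewrite nsegC; congr nseg; tolia.
    by rewrite hfe in hB'; rewrite hB' in hf.
have Finj : injective F.
  move=> j1 j2 E; apply: ord_inj.
  by case: (hFj j1) => _ _ <-; case: (hFj j2) => _ _ <-; rewrite E.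
have cI : #|[set F j | j : 'I_(m - 1)]| = m - 1.
  by rewrite card_in_imset ?card_ord // => a b _ _; apply: Finj.
have eN : Ordinal hNlt \in e by rewrite in_nseg eqxx orbT.
have [w wg wN] : exists2 w : 'I_(2 * m), w \in g & N <= val w.
  case/orP: hg => /existsP[w /andP[wg /eqP wv]]; exists w => //; rewrite wv //.
have sub : [set F j | j : 'I_(m - 1)] \subset B :\: [set e; g].
  apply/subsetP => h /imsetP[j _ ->]; case: (hFj j) => hb hw _.
  rewrite !inE hb andbT negb_or; apply/andP; split; apply/eqP => E.
    by rewrite E in hw; have := hw _ eN; rewrite ltnn.
  by rewrite E in hw; have := hw _ wg; rewrite ltnNge wN.
have := subset_leq_card sub.
rewrite cI cardsD (setIidPr _); last by apply/subsetP => z; rewrite !inE => /orP[] /eqP ->.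
rewrite cards2 eq_sym neq.
case/andP: hB => _ /eqP -> hc; tolia.
Qed.
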